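(* Let $\mathbf K$ be an abstract class. Assume: \begin{enumerate} \item $\mathrm{LS}(\mathbf K) < \infty$ and $\mathbf K$ has no models of cardinality $<\mathrm{LS}(\mathbf K)$; \item for every $\lambda \in \mathrm{dom}(\mathbf K)$, $\mathbf K$ is $[\mathrm{LS}(\mathbf K), \lambda)$-continuous; \item (coherence for models of different sizes) if $M_0, M_1, M_2 \in \mathbf K$, $M_0 \le_{\mathbf K} M_2$, $M_1 \le_{\mathbf K} M_2$, $|M_0| \subseteq |M_1|$, and $\|M_0\| < \|M_1\| < \|M_2\|$, then $M_0 \le_{\mathbf K} M_1$; \item (smoothness for big extensions) if $\langle M_i : i \le \delta\rangle$ is $\le_{\mathbf K}$-increasing continuous (with $M_\delta = \bigcup_{i<\delta}M_i \in \mathbf K$), $N \in \mathbf K$, $M_i \le_{\mathbf K} N$ for all $i<\delta$, and $\|M_\delta\| < \|N\|$, then $M_\delta \le_{\mathbf K} N$; \item (resolvability for successors) if $\lambda \ge \mathrm{LS}(\mathbf K)$, $M \le_{\mathbf K} N$, $\|M\| = \lambda$ and $\|N\| = \lambda^+$, then there is an increasing continuous chain $\langle M_i : i<\lambda^+\rangle$ of models of cardinality $\lambda$ with $M_0 = M$ and $\bigcup_{i<\lambda^+} M_i = N$. \end{enumerate} Then $\mathbf K$ is resolvable.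
   Context: An abstract class $\mathbf K=(K,\le_{\mathbf K})$ is a class of structures in a fixed vocabulary $\tau(\mathbf K)$, closed under isomorphism, with a partial order extending substructure and invariant under isomorphism. $\mathrm{LS}(\mathbf K)$ is the least $\lambda\ge|\tau(\mathbf K)|+\aleph_0$ such that every $A\subseteq|M|$, $M\in\mathbf K$, is contained in some $M_0\le_{\mathbf K} M$ with $\|M_0\|\le|A|+\lambda$ ($\infty$ if none exists). $\mathrm{dom}(\mathbf K)$ is the class of cardinals $\lambda$ with a model of cardinality $\lambda$. $\mathbf K$ is $[\lambda_1,\lambda_2)$-continuous if for every limit $\delta$ and every $\le_{\mathbf K}$-increasing chain $\langle M_i:i<\delta\rangle$ of models with cardinalities in $[\lambda_1,\lambda_2)$, $\bigcup_{i<\delta}M_i\in\mathbf K$ and $M_0\le_{\mathbf K}\bigcup_{i<\delta}M_i$. For $M_0 <_{\mathbf K} M$, $M$ is $\delta$-resolvable over $M_0$ if there is a strictly increasing continuous chain $\langle N_i : i \le\delta\rangle$ in $\mathbf K$ with $N_0 = M_0$, $N_\delta = M$ and $\|N_i\| = \|M_0\| + |i|$ for all $i\le\delta$; $M$ is resolvable over $M_0$ if it is $\delta$-resolvable over $M_0$ for some limit ordinal $\delta$; $M$ is resolvable if it is resolvable over every $M_0 \le_{\mathbf K} M$ with $\|M_0\|<\|M\|$; $\mathbf K$ is resolvable if every $M\in\mathbf K$ is resolvable. *)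

(* Defs.v *)
(* abstract classes, cardinals (via injections/bijections of types)
   and ordinals (via well-ordered index types). *)
From Stdlib Require Import List.
Import ListNotations.
Set Implicit Arguments.
Unset Strict Implicit.

Definition card_le (A B : Type) : Prop :=
  exists f : A -> B, forall x y, f x = f y -> x = y.
Definition card_eq (A B : Type) : Prop :=
  exists f : A -> B, (forall x y, f x = f y -> x = y) /\ (forall y, exists x, f x = y).
Definition card_lt (A B : Type) : Prop := card_le A B /\ ~ card_le B A.
Definition is_succ_card (A B : Type) : Prop :=
  card_lt A B /\ (forall C : Type, card_lt A C -> card_le B C).

Definition well_order {I : Type} (lt : I -> I -> Prop) : Prop :=
  (forall i, ~ lt i i) /\
  (forall i j k, lt i j -> lt j k -> lt i k) /\
  (forall i j, lt i j \/ i = j \/ lt j i) /\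
  well_founded lt.
Definition limit_ord {I : Type} (lt : I -> I -> Prop) : Prop :=
  inhabited I /\ (forall i, exists j, lt i j).
Definition is_limit {I : Type} (lt : I -> I -> Prop) (i : I) : Prop :=
  (exists j, lt j i) /\ (forall j, lt j i -> exists k, lt j k /\ lt k i).
Definition least {I : Type} (lt : I -> I -> Prop) (i0 : I) : Prop :=
  forall j, ~ lt j i0.
(* the initial segment {j | j < i}; its cardinality is |i| *)
Definition seg {I : Type} (lt : I -> I -> Prop) (i : I) : Type := { j : I | lt j i }.

Record vocab := {
  fsym : Type; rsym : Type;
  farity : fsym -> nat; rarity : rsym -> nat }.

(* A tau-structure whose universe is a subset of the ambient type U.
   Values of functions / relations on arguments outside the universe are irrelevant. *)
Record structure (tau : vocab) (U : Type) := {
  sdom : U -> Prop;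
  sfun : fsym tau -> list U -> U;
  srel : rsym tau -> list U -> Prop }.
Arguments sdom {tau U}. Arguments sfun {tau U}. Arguments srel {tau U}.

Section Structures.
Context {tau : vocab} {U : Type}.

Definition dsort (M : structure tau U) : Type := { x : U | sdom M x }.

Definition args_in (M : structure tau U) (l : list U) (n : nat) : Prop :=
  length l = n /\ Forall (sdom M) l.

Definition wf_struct (M : structure tau U) : Prop :=
  forall f l, args_in M l (farity f) -> sdom M (sfun M f l).

Definition substructure (M N : structure tau U) : Prop :=
  (forall x, sdom M x -> sdom N x) /\
  (forall f l, args_in M l (farity f) -> sfun M f l = sfun N f l) /\
  (forall r l, args_in M l (rarity r) -> (srel M r l <-> srel N r l)).

Definition same_universe (M N : structure tau U) : Prop :=
  forall x, sdom M x <-> sdom N x.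

Definition iso (h : U -> U) (M N : structure tau U) : Prop :=
  (forall x, sdom M x -> sdom N (h x)) /\
  (forall x y, sdom M x -> sdom M y -> h x = h y -> x = y) /\
  (forall y, sdom N y -> exists x, sdom M x /\ h x = y) /\
  (forall f l, args_in M l (farity f) -> h (sfun M f l) = sfun N f (map h l)) /\
  (forall r l, args_in M l (rarity r) -> (srel M r l <-> srel N r (map h l))).

Definition is_union {I : Type} (P : I -> Prop) (ch : I -> structure tau U)
    (M : structure tau U) : Prop :=
  (forall x, sdom M x <-> exists j, P j /\ sdom (ch j) x) /\
  (forall j, P j -> substructure (ch j) M).
End Structures.

Record abstract_class (tau : vocab) (U : Type) := {
  K : structure tau U -> Prop;
  le : structure tau U -> structure tau U -> Prop;
  K_wf : forall M, K M -> wf_struct M;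
  K_iso : forall h M N, K M -> iso h M N -> K N;
  le_K : forall M N, le M N -> K M /\ K N;
  le_refl : forall M, K M -> le M M;
  le_trans : forall M N P, le M N -> le N P -> le M P;
  le_antisym : forall M N, le M N -> le N M -> same_universe M N;
  le_sub : forall M N, le M N -> substructure M N;
  le_iso : forall h M1 M2 N1 N2,
      iso h M1 N1 -> iso h M2 N2 -> le M1 M2 -> le N1 N2 }.
Arguments K {tau U}. Arguments le {tau U}.

Section Class.
Context {tau : vocab} {U : Type} (C : abstract_class tau U).

Definition lt_K (M N : structure tau U) : Prop := le C M N /\ ~ same_universe M N.

Definition LS_prop (lam : Type) : Prop :=
  forall M, K C M -> forall A : U -> Prop, (forall x, A x -> sdom M x) ->
    exists M0, le C M0 M /\ (forall x, A x -> sdom M0 x) /\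
               card_le (dsort M0) ({x : U | A x} + lam).

(* LS(K) = LS (in particular LS(K) < infinity) *)
Definition is_LS (LS : Type) : Prop :=
  card_le ((fsym tau + rsym tau) + nat) LS /\ LS_prop LS /\
  (forall lam : Type, card_le ((fsym tau + rsym tau) + nat) lam -> LS_prop lam ->
     card_le LS lam).

Definition incr_chain {I : Type} (lt : I -> I -> Prop) (ch : I -> structure tau U) : Prop :=
  (forall i, K C (ch i)) /\ (forall i j, lt i j -> le C (ch i) (ch j)).

Definition continuous {I : Type} (lt : I -> I -> Prop) (ch : I -> structure tau U) : Prop :=
  forall i, is_limit lt i -> is_union (fun j => lt j i) ch (ch i).

Definition resolvable_over_by {I : Type} (lt : I -> I -> Prop)
    (M0 M : structure tau U) : Prop :=
  exists ch : I -> structure tau U,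
    (forall i, K C (ch i)) /\
    (forall i j, lt i j -> lt_K (ch i) (ch j)) /\
    (forall i, lt_K (ch i) M) /\
    continuous lt ch /\
    is_union (fun _ => True) ch M /\
    (forall i0, least lt i0 -> ch i0 = M0) /\
    (forall i, card_eq (dsort (ch i)) (dsort M0 + seg lt i)) /\
    card_eq (dsort M) (dsort M0 + I).

Definition resolvable_over (M0 M : structure tau U) : Prop :=
  lt_K M0 M /\
  exists (I : Type) (lt : I -> I -> Prop),
    well_order lt /\ limit_ord lt /\ resolvable_over_by lt M0 M.

Definition resolvable_model (M : structure tau U) : Prop :=
  forall M0, le C M0 M -> card_lt (dsort M0) (dsort M) -> resolvable_over M0 M.

Definition resolvable_class : Prop :=
  forall M, K C M -> resolvable_model M.
End Class.

(* Main.v *)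
Require Import Defs.
From Stdlib Require Import List.
From Stdlib Require Import Classical ClassicalEpsilon FunctionalExtensionality PropExtensionality ProofIrrelevance Cantor Wellfounded.
Module PreM.
From mathcomp Require Import ssreflect ssrfun ssrbool eqtype boolp wochoice.
Lemma wo_prop (T : Type) : exists R : T -> T -> Prop,
  (forall Q : T -> Prop, (exists x, Q x) -> exists z, Q z /\ forall x, Q x -> R z x) /\
  (forall x y, R x y -> R y x -> x = y).
Proof.
elim/Peq: T => T.
have [R wR] := well_ordering_principle T.
have refl : forall x, R x x.
  move=> x. have ne : nonempty [pred t | t == x] by exists x; rewrite inE eqxx.
  have [z [[zx zl] _]] := wR _ ne. move: zx; rewrite inE => /eqP zx; subst z.
  by apply: zl; rewrite inE.
exists (fun x y => R x y); split.
- move=> Q [x Qx].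
  have ne : nonempty [pred t | `[< Q t >]].
    by exists x; rewrite inE; apply/asboolP.
  have [z [[zQ zmin] _]] := wR _ ne.
  exists z; split; first by move: zQ; rewrite inE => /asboolP.
  by move=> y Qy; apply: zmin; rewrite inE; apply/asboolP.
- move=> x y Rxy Ryx.
  have ne : nonempty [pred t | (t == x) || (t == y)].
    by exists x; rewrite inE eqxx.
  have [z [_ zu]] := wR _ ne.
  have e1 := zu x. have e2 := zu y.
  rewrite -e1 ?e2 //; split; rewrite ?inE ?eqxx ?orbT //;
   by move=> t; rewrite inE => /orP[/eqP->|/eqP->].
Qed.
From mathcomp Require Import classical_sets.
Lemma zorn_prop (T : Type) (R : T -> T -> Prop) :
  (forall t, R t t) -> (forall r s t, R r s -> R s t -> R r t) ->
  (forall s t, R s t -> R t s -> s = t) ->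
  (forall A : T -> Prop, (forall s t, A s -> A t -> R s t \/ R t s) ->
     exists t, forall s, A s -> R s t) ->
  exists t, forall s, R t s -> s = t.
Proof.
move=> r tr an ch.
have := @Zorn T (fun a b => `[< R a b >]).
case.
- by move=> t; apply/asboolP.
- by move=> a b c /asboolP ? /asboolP ?; apply/asboolP; apply: tr; eauto.
- by move=> a b /asboolP ? /asboolP ?; apply: an.
- move=> A tA. have [t Ht] : exists t, forall s, A s -> R s t.
    { apply: ch; move=> s u As Au. by case: (tA s u As Au) => [/asboolP|/asboolP]; auto. }
  by exists t => s As; apply/asboolP; apply: Ht.
move=> t Ht.
exists t => s Rts; apply: Ht; exact/asboolP.
Qed.

End PreM.
Import PreM.


From Stdlib Require Import Classical ClassicalEpsilon FunctionalExtensionality PropExtensionality ProofIrrelevance Cantor Wellfounded.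

Lemma cle_refl A : card_le A A.
Proof. exists (fun x => x); auto. Qed.
Lemma cle_trans A B C : card_le A B -> card_le B C -> card_le A C.
Proof. intros [f Hf] [g Hg]; exists (fun x => g (f x)); auto. Qed.
Lemma ceq_le A B : card_eq A B -> card_le A B.
Proof. intros [f [Hf _]]; exists f; auto. Qed.
Lemma ceq_refl A : card_eq A A.
Proof. exists (fun x => x); split; eauto. Qed.
Lemma ceq_sym A B : card_eq A B -> card_eq B A.
Proof.
intros [f [Hi Hs]].
exists (fun y => proj1_sig (constructive_indefinite_description _ (Hs y))).
split.
- intros y1 y2 E.
  destruct (constructive_indefinite_description _ (Hs y1)) as [x1 e1].
  destruct (constructive_indefinite_description _ (Hs y2)) as [x2 e2].
  simpl in E; subst; auto.
- intros x; exists (f x).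
  destruct (constructive_indefinite_description _ (Hs (f x))) as [x1 e1]; simpl; auto.
Qed.
Lemma ceq_le' A B : card_eq A B -> card_le B A.
Proof. intros H; apply ceq_le, ceq_sym, H. Qed.
Lemma ceq_trans A B C : card_eq A B -> card_eq B C -> card_eq A C.
Proof.
intros [f [Hf Sf]] [g [Hg Sg]]; exists (fun x => g (f x)); split; auto.
intros z; destruct (Sg z) as [y <-]; destruct (Sf y) as [x <-]; eauto.
Qed.

Section SB.
Variables (A B : Type) (f : A -> B) (g : B -> A).
Hypothesis (Hf : forall x y, f x = f y -> x = y) (Hg : forall x y, g x = g y -> x = y).
Inductive XS : A -> Prop :=
| XS0 : forall a, (forall b, g b <> a) -> XS a
| XS1 : forall a, XS a -> XS (g (f a)).
Lemma notXS_g a : ~ XS a -> exists b, g b = a.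
Proof. intros H; apply NNPP; intro H'; apply H, XS0; intros b E; apply H'; eauto. Qed.
Definition sbh (a : A) : B :=
  match excluded_middle_informative (XS a) with
  | left _ => f a
  | right n => proj1_sig (constructive_indefinite_description _ (notXS_g _ n))
  end.
Lemma sb_bij : card_eq A B.
Proof.
exists sbh; split.
- intros a1 a2; unfold sbh.
  destruct (excluded_middle_informative (XS a1)) as [x1|n1];
  destruct (excluded_middle_informative (XS a2)) as [x2|n2].
  + auto.
  + destruct (constructive_indefinite_description _ (notXS_g _ n2)) as [b e]; simpl.
    intros E; subst; exfalso; apply n2, XS1; auto.
  + destruct (constructive_indefinite_description _ (notXS_g _ n1)) as [b e]; simpl.
    intros E; subst; exfalso; apply n1, XS1; auto.
  + destruct (constructive_indefinite_description _ (notXS_g _ n1)) as [b e]; simpl.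
    destruct (constructive_indefinite_description _ (notXS_g _ n2)) as [b' e']; simpl.
    intros E; subst; auto.
- intros b. destruct (classic (XS (g b))) as [x|n].
  + inversion x as [a H E|a H E].
    * exfalso; apply (H b); auto.
    * apply Hg in E; subst b. exists a; unfold sbh.
      destruct (excluded_middle_informative (XS a)) as [_|n]; [auto|contradiction].
  + exists (g b); unfold sbh.
    destruct (excluded_middle_informative (XS (g b))) as [x|n']; [contradiction|].
    destruct (constructive_indefinite_description _ (notXS_g _ n')) as [b' e]; simpl; auto.
Qed.
End SB.

Lemma SB A B : card_le A B -> card_le B A -> card_eq A B.
Proof. intros [f Hf] [g Hg]; exact (sb_bij _ _ f g Hf Hg). Qed.

Lemma zorn_sets (T : Type) (P : (T -> Prop) -> Prop) :
  (forall F : (T -> Prop) -> Prop, (forall X, F X -> P X) ->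
     (forall X Y, F X -> F Y -> (forall t, X t -> Y t) \/ (forall t, Y t -> X t)) ->
     P (fun t => exists X, F X /\ X t)) ->
  exists A, P A /\ forall B, (forall t, A t -> B t) -> P B -> forall t, B t -> A t.
Proof.
intros HP.
destruct (@zorn_prop {X | P X} (fun a b => forall t, proj1_sig a t -> proj1_sig b t))
  as [[A PA] HA].
- auto.
- eauto.
- intros [a pa] [b pb] H1 H2; simpl in *.
  assert (a = b) by (apply functional_extensionality; intro t;
                     apply propositional_extensionality; split; auto).
  subst; f_equal; apply proof_irrelevance.
- intros F HF.
  assert (PU : P (fun t => exists X, (fun X => exists x, F x /\ proj1_sig x = X) X /\ X t)).
  { apply HP.
    - intros X [x [_ <-]]; exact (proj2_sig x).
    - intros X Y [x [fx <-]] [y [fy <-]]; apply HF; auto. }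
  exists (exist _ _ PU); intros s Fs t st; simpl.
  exists (proj1_sig s); split; eauto.
- exists A; split; auto.
  intros B AB PB.
  specialize (HA (exist _ B PB) AB). injection HA; intros ->; auto.
Qed.

Lemma cle_total A B : card_le A B \/ card_le B A.
Proof.
destruct (@zorn_sets (A * B) (fun G => (forall a b b', G (a, b) -> G (a, b') -> b = b') /\
                                   (forall a a' b, G (a, b) -> G (a', b) -> a = a')))
  as [G [[G1 G2] HG]].
- intros F HF Hc; split.
  + intros a b b' [X [FX Xb]] [Y [FY Yb]].
    destruct (Hc X Y FX FY) as [h|h].
    * apply (proj1 (HF Y FY) a); auto.
    * apply (proj1 (HF X FX) a); auto.
  + intros a a' b [X [FX Xb]] [Y [FY Yb]].
    destruct (Hc X Y FX FY) as [h|h].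
    * apply (proj2 (HF Y FY) _ _ b); auto.
    * apply (proj2 (HF X FX) _ _ b); auto.
- destruct (classic (forall a, exists b, G (a, b))) as [Ha|Ha].
  + left. exists (fun a => proj1_sig (constructive_indefinite_description _ (Ha a))).
    intros x y. destruct (constructive_indefinite_description _ (Ha x)) as [bx ex].
    destruct (constructive_indefinite_description _ (Ha y)) as [byy ey]. simpl.
    intros ->; eauto.
  + destruct (classic (forall b, exists a, G (a, b))) as [Hb|Hb].
    * right. exists (fun b => proj1_sig (constructive_indefinite_description _ (Hb b))).
      intros x y. destruct (constructive_indefinite_description _ (Hb x)) as [ax ex].
      destruct (constructive_indefinite_description _ (Hb y)) as [ay ey]. simpl.
      intros ->; eauto.
    * exfalso.
      apply not_all_ex_not in Ha; destruct Ha as [a0 Ha0].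
      apply not_all_ex_not in Hb; destruct Hb as [b0 Hb0].
      assert (HH := HG (fun p => G p \/ p = (a0, b0)) ltac:(intros t h; left; exact h)).
      assert (G (a0, b0)).
      { apply HH; auto. split.
        - intros a b b' [h|h] [h'|h']; try congruence.
          + eauto.
          + injection h'; intros; subst. exfalso; apply Ha0; eauto.
          + injection h; intros; subst. exfalso; apply Ha0; eauto.
        - intros a a' b [h|h] [h'|h']; try congruence.
          + eauto.
          + injection h'; intros; subst. exfalso; apply Hb0; eauto.
          + injection h; intros; subst. exfalso; apply Hb0; eauto. }
      apply Ha0; eauto.
Qed.

Lemma cle_sum A A' B B' : card_le A A' -> card_le B B' -> card_le (A + B) (A' + B').
Proof.
intros [f Hf] [g Hg]; exists (fun x => match x with inl a => inl (f a) | inr b => inr (g b) end).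
intros [a|b] [a'|b'] E; inversion E; f_equal; auto.
Qed.
Lemma cle_prod A A' B B' : card_le A A' -> card_le B B' -> card_le (A * B) (A' * B').
Proof.
intros [f Hf] [g Hg]; exists (fun x => (f (fst x), g (snd x))).
intros [a b] [a' b'] E; inversion E; f_equal; auto.
Qed.
Lemma cle_inl A B : card_le A (A + B).
Proof. exists inl; intros x y E; inversion E; auto. Qed.
Lemma cle_inr A B : card_le B (A + B).
Proof. exists inr; intros x y E; inversion E; auto. Qed.
Lemma cle_sum_comm A B : card_le (A + B) (B + A).
Proof.
exists (fun x => match x with inl a => inr a | inr b => inl b end).
intros [a|b] [a'|b'] E; inversion E; auto.
Qed.
Lemma cle_sum_assoc A B C : card_le ((A + B) + C) (A + (B + C)).
Proof.
exists (fun x => match x with inl (inl a) => inl a | inl (inr b) => inr (inl b)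
                 | inr c => inr (inr c) end).
intros [[a|b]|c] [[a'|b']|c'] E; inversion E; auto.
Qed.
Lemma cle_sum_assoc' A B C : card_le (A + (B + C)) ((A + B) + C).
Proof.
exists (fun x => match x with inl a => inl (inl a) | inr (inl b) => inl (inr b)
                 | inr (inr c) => inr c end).
intros [a|[b|c]] [a'|[b'|c']] E; inversion E; auto.
Qed.
Lemma cle_split X (P : X -> Prop) : card_le X ({x | P x} + {x | ~ P x}).
Proof.
exists (fun x => match excluded_middle_informative (P x) with
                 | left h => inl (exist _ x h) | right h => inr (exist _ x h) end).
intros x y.
destruct (excluded_middle_informative (P x)); destruct (excluded_middle_informative (P y));
 intros E; inversion E; auto.
Qed.
Lemma cle_sub X (P : X -> Prop) : card_le {x | P x} X.
Proof. exists (@proj1_sig _ _); intros [x px] [y py] E; simpl in E; subst; f_equal; apply proof_irrelevance. Qed.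

Definition inf (X : Type) := card_le nat X.
Lemma inf_le A B : inf A -> card_le A B -> inf B.
Proof. intros; eapply cle_trans; eauto. Qed.

Lemma sum_le_prod X : inf X -> card_le (X + X) (X * X).
Proof.
intros [e He].
exists (fun x => match x with inl a => (a, e 0) | inr a => (a, e 1) end).
intros [a|a] [b|b] E; inversion E; auto;
 exfalso; match goal with H : e _ = e _ |- _ => apply He in H; discriminate end.
Qed.
Lemma le_prod_diag X : inf X -> card_le X (X * X).
Proof. intros [e He]; exists (fun x => (x, e 0)); intros a b E; inversion E; auto. Qed.

Lemma sig_eq {X} {P : X -> Prop} (a b : {x | P x}) : proj1_sig a = proj1_sig b -> a = b.
Proof. destruct a, b; simpl; intros; subst; f_equal; apply proof_irrelevance. Qed.


Lemma to_nat_inj p q : to_nat p = to_nat q -> p = q.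
Proof. intros E. rewrite <- (cancel_of_to p), <- (cancel_of_to q), E; reflexivity. Qed.

Section Hess.
Variable X : Type.
Variable e : nat -> X.
Hypothesis He : forall m n, e m = e n -> m = n.

Definition Rg (G : (X * X) * X -> Prop) x := exists p, G (p, x).
Definition Gd (G : (X * X) * X -> Prop) :=
  (forall p y z, G (p, y) -> G (p, z) -> y = z) /\
  (forall p q y, G (p, y) -> G (q, y) -> p = q) /\
  (forall p, (exists y, G (p, y)) <-> (Rg G (fst p) /\ Rg G (snd p))).
Definition G0 (t : (X * X) * X) : Prop :=
  exists m n, t = ((e m, e n), e (to_nat (m, n))).

Lemma rg_e m : Rg G0 (e m).
Proof.
exists (e (fst (of_nat m)), e (snd (of_nat m))), (fst (of_nat m)), (snd (of_nat m)).
rewrite <- surjective_pairing, cancel_to_of. reflexivity.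
Qed.

Lemma G0_Gd : Gd G0.
Proof.
split; [|split].
- intros p y z [m [n E1]] [m' [n' E2]]. injection E1 as Ep Ey. injection E2 as Ep' Ez.
  subst. injection Ep' as E3 E4. apply He in E3; apply He in E4. subst. reflexivity.
- intros p q y [m [n E1]] [m' [n' E2]]. injection E1 as Ep Ey. injection E2 as Ep' Ez.
  subst. apply He in Ez.
  assert (Hmn := to_nat_inj (m, n) (m', n') Ez).
  injection Hmn as -> ->. reflexivity.
- intros [a b]; simpl; split.
  + intros [y [m [n E]]]. injection E as Ea Eb Ey; subst.
    split; apply rg_e.
  + intros [[p1 [m1 [n1 E1]]] [p2 [m2 [n2 E2]]]].
    injection E1 as _ Ea. injection E2 as _ Eb. subst.
    eexists; exists (to_nat (m1, n1)), (to_nat (m2, n2)); reflexivity.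
Qed.

Definition PP G := Gd G /\ ((forall t, G0 t -> G t) \/ (forall t, ~ G t)).

Lemma PP_union (F : ((X * X) * X -> Prop) -> Prop) :
  (forall G, F G -> PP G) ->
  (forall G H, F G -> F H -> (forall t, G t -> H t) \/ (forall t, H t -> G t)) ->
  PP (fun t => exists G, F G /\ G t).
Proof.
intros HF Hc. split; [split; [|split]|].
- intros p y z [G1 [F1 h1]] [G2 [F2 h2]].
  destruct (Hc _ _ F1 F2) as [s|s].
  + apply (proj1 (proj1 (HF _ F2)) p); auto.
  + apply (proj1 (proj1 (HF _ F1)) p); auto.
- intros p q y [G1 [F1 h1]] [G2 [F2 h2]].
  destruct (Hc _ _ F1 F2) as [s|s].
  + apply (proj1 (proj2 (proj1 (HF _ F2))) p q y); auto.
  + apply (proj1 (proj2 (proj1 (HF _ F1))) p q y); auto.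
- intros p; split.
  + intros [y [G1 [F1 h1]]].
    destruct (proj1 (proj2 (proj2 (proj1 (HF _ F1))) p) (ex_intro _ y h1)) as [[q1 r1] [q2 r2]].
    split; [exists q1|exists q2]; exists G1; auto.
  + intros [[q1 [G1 [F1 h1]]] [q2 [G2 [F2 h2]]]].
    destruct (Hc _ _ F1 F2) as [s|s].
    * destruct (proj2 (proj2 (proj2 (proj1 (HF _ F2))) p)) as [y hy].
      { split; [exists q1|exists q2]; auto. }
      exists y, G2; auto.
    * destruct (proj2 (proj2 (proj2 (proj1 (HF _ F1))) p)) as [y hy].
      { split; [exists q1|exists q2]; auto. }
      exists y, G1; auto.
- destruct (classic (exists G, F G /\ forall t, G0 t -> G t)) as [[G [FG HG]]|N].
  + left; intros t h; exists G; auto.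
  + right; intros t [G [FG h]].
    destruct (proj2 (HF _ FG)) as [h'|h']; [apply N; eauto|eapply h'; eauto].
Qed.

Lemma hess_main : card_eq (X * X) X.
Proof.
destruct (@zorn_sets _ PP PP_union) as [A [[[AF [AI AD]] A0] Amax]].
assert (A0' : forall t, G0 t -> A t).
{ destruct A0 as [h|h]; auto.
  apply Amax; [intros t ht; exfalso; eapply h; eauto|split; [apply G0_Gd|left; auto]]. }
set (S := Rg A).
set (Sx := {x | S x}).
assert (Se : forall n, S (e n)).
{ intros n; destruct (rg_e n) as [p hp]; exists p; auto. }
assert (infS : inf Sx).
{ exists (fun n => exist S (e n) (Se n)). intros m n E. apply He. injection E; auto. }
assert (ASdom : forall p y, A (p, y) -> S (fst p) /\ S (snd p)).
{ intros p y h. apply (proj1 (AD p)); eauto. }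
assert (ASrg : forall p y, A (p, y) -> S y).
{ intros p y h; exists p; auto. }
assert (Hd : forall q : Sx * Sx, exists y, A ((proj1_sig (fst q), proj1_sig (snd q)), y)).
{ intros [[a ha] [b hb]]; apply (proj2 (AD (a, b))); simpl; auto. }
assert (SS : card_eq (Sx * Sx) Sx).
{ exists (fun q => exist S (proj1_sig (constructive_indefinite_description _ (Hd q)))
                   (ASrg _ _ (proj2_sig (constructive_indefinite_description _ (Hd q))))).
  split.
  - intros q q' E. injection E as E.
    destruct (constructive_indefinite_description _ (Hd q)) as [y hy].
    destruct (constructive_indefinite_description _ (Hd q')) as [y' hy']. simpl in E. subst y'.
    pose proof (AI _ _ _ hy hy') as E'. destruct q as [[a ha] [b hb]]; destruct q' as [[a' ha'] [b' hb']].
    simpl in E'. injection E' as -> ->. f_equal; apply sig_eq; reflexivity.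
  - intros [x [p hp]]. destruct (ASdom _ _ hp) as [h1 h2].
    exists (exist S (fst p) h1, exist S (snd p) h2). apply sig_eq; simpl.
    destruct (constructive_indefinite_description _ _) as [y hy]; simpl.
    simpl in hy; rewrite <- surjective_pairing in hy. eapply AF; eauto. }
assert (SSle : forall T, card_le T Sx -> card_le (T * T) Sx).
{ intros T h. eapply cle_trans; [apply cle_prod; apply h|apply ceq_le, SS]. }
assert (S2 : card_le (Sx + Sx) Sx).
{ eapply cle_trans; [apply sum_le_prod, infS|apply ceq_le, SS]. }
assert (Hc : card_le {x | ~ S x} Sx).
{ destruct (cle_total {x | ~ S x} Sx) as [h|[j Hj]]; auto. exfalso.
  set (Bx := fun x => exists s, proj1_sig (j s) = x).
  assert (BnS : forall x, Bx x -> ~ S x).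
  { intros x [s <-]. exact (proj2_sig (j s)). }
  set (Bt := {x | Bx x}).
  assert (SB1 : card_le Sx Bt).
  { exists (fun s => exist Bx (proj1_sig (j s)) (ex_intro _ s eq_refl)).
    intros s s' E; injection E as E. apply Hj, sig_eq, E. }
  assert (SB2 : card_le Bt Sx).
  { exists (fun b : Bt => proj1_sig (constructive_indefinite_description _ (proj2_sig b))).
    intros [b hb] [b' hb']; simpl.
    destruct (constructive_indefinite_description _ hb) as [s hs].
    destruct (constructive_indefinite_description _ hb') as [s' hs']. simpl.
    intros ->; apply sig_eq; simpl; congruence. }
  set (S' := fun x => S x \/ Bx x).
  set (D := {p : X * X | S' (fst p) /\ S' (snd p) /\ ~ (S (fst p) /\ S (snd p))}).
  assert (S'le : card_le {x | S' x} Sx).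
  { eapply cle_trans; [|apply S2].
    eapply cle_trans; [|apply cle_sum; [apply cle_refl|apply SB2]].
    exists (fun x => match excluded_middle_informative (S (proj1_sig x)) with
            | left h => inl (exist S _ h)
            | right h => inr (exist Bx (proj1_sig x)
                   (match proj2_sig x with or_introl h' => False_ind _ (h h') | or_intror h' => h' end))
            end).
    intros [x hx] [y hy]; simpl.
    destruct (excluded_middle_informative (S x)); destruct (excluded_middle_informative (S y));
      intros E; inversion E; apply sig_eq; auto. }
  assert (DB : card_eq D Bt).
  { apply SB.
    - eapply cle_trans; [|apply SB1].
      eapply cle_trans; [|apply (SSle _ S'le)].
      exists (fun d : D => (exist S' (fst (proj1_sig d)) (proj1 (proj2_sig d)),
                     exist S' (snd (proj1_sig d)) (proj1 (proj2 (proj2_sig d))))).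
      intros [[a b] h] [[a' b'] h'] E; simpl in E. injection E as E1 E2.
      apply sig_eq; simpl; congruence.
    - unshelve eexists (fun b : Bt => exist _ (proj1_sig b, proj1_sig b) _).
      + simpl. split; [right; exact (proj2_sig b)|split; [right; exact (proj2_sig b)|]].
        intros [h _]. exact (BnS _ (proj2_sig b) h).
      + intros b b' E. injection E as E. apply sig_eq; auto. }
  destruct DB as [phi [Hphi1 Hphi2]].
  set (A' := fun t => A t \/ exists d : D, t = (proj1_sig d, proj1_sig (phi d))).
  assert (RgA' : forall x, Rg A' x <-> S' x).
  { intros x; split.
    - intros [p [h|[d E]]]; [left; exists p; auto|].
      injection E as _ ->. right; exact (proj2_sig (phi d)).
    - intros [[p h]|h]; [exists p; left; auto|].
      destruct (Hphi2 (exist Bx x h)) as [d hd]. exists (proj1_sig d); right; exists d.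
      rewrite hd; reflexivity. }
  assert (PA' : PP A').
  { split; [split; [|split]|left; intros t h; left; auto].
    - intros p y z [h|[d E]] [h'|[d' E']].
      + eapply AF; eauto.
      + injection E' as -> ->. exfalso. apply (proj2 (proj2 (proj2_sig d'))). eapply ASdom; eauto.
      + injection E as -> ->. exfalso. apply (proj2 (proj2 (proj2_sig d))). eapply ASdom; eauto.
      + injection E as -> ->. injection E' as E1 ->. apply sig_eq in E1. subst; auto.
    - intros p q y [h|[d E]] [h'|[d' E']].
      + eapply AI; eauto.
      + injection E' as -> ->. exfalso. apply (BnS _ (proj2_sig (phi d'))). eapply ASrg; eauto.
      + injection E as -> ->. exfalso. apply (BnS _ (proj2_sig (phi d))). eapply ASrg; eauto.
      + injection E as -> E1. injection E' as -> E2. rewrite E2 in E1.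
        apply sig_eq, Hphi1 in E1. subst; auto.
    - intros p. rewrite (RgA' (fst p)), (RgA' (snd p)). split.
      + intros [y [h|[d E]]].
        * destruct (ASdom _ _ h); split; left; auto.
        * injection E as -> _. exact (conj (proj1 (proj2_sig d)) (proj1 (proj2 (proj2_sig d)))).
      + intros [h1 h2]. destruct (classic (S (fst p) /\ S (snd p))) as [hs|hs].
        * destruct (proj2 (AD p)) as [y hy]; [exact hs|exists y; left; auto].
        * exists (proj1_sig (phi (exist _ p (conj h1 (conj h2 hs))))). right.
          exists (exist _ p (conj h1 (conj h2 hs))); reflexivity. }
  assert (Hsub := Amax A' (fun t h => or_introl h) PA').
  set (b0 := j (exist S (e 0) (Se 0))).
  assert (hb : Bx (proj1_sig b0)) by (exists (exist S (e 0) (Se 0)); reflexivity).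
  set (d0 := exist (fun p : X * X => S' (fst p) /\ S' (snd p) /\ ~ (S (fst p) /\ S (snd p)))
     (proj1_sig b0, proj1_sig b0)
     (conj (or_intror hb) (conj (or_intror hb) (fun h => BnS _ hb (proj1 h))))).
  assert (hA := Hsub (proj1_sig d0, proj1_sig (phi d0)) (or_intror (ex_intro _ d0 eq_refl))).
  apply (BnS _ hb). exact (proj1 (ASdom _ _ hA)). }
assert (XS : card_eq X Sx).
{ apply SB; [|apply cle_sub].
  eapply cle_trans; [apply cle_split with (P := S)|].
  eapply cle_trans; [apply cle_sum; [apply cle_refl|apply Hc]|apply S2]. }
eapply ceq_trans; [|apply ceq_sym, XS].
eapply ceq_trans; [|apply SS].
destruct XS as [f [Hf1 Hf2]].
exists (fun q => (f (fst q), f (snd q))). split.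
- intros [a b] [a' b'] E; injection E as E1 E2; simpl in *; f_equal; auto.
- intros [a b]; destruct (Hf2 a) as [x <-]; destruct (Hf2 b) as [y <-]; exists (x, y); reflexivity.
Qed.
End Hess.

Lemma hess X : inf X -> card_eq (X * X) X.
Proof. intros [e He]; exact (hess_main _ e He). Qed.


Lemma abs_sum Z A B : inf Z -> card_le A Z -> card_le B Z -> card_le (A + B) Z.
Proof.
intros iZ hA hB. eapply cle_trans; [apply cle_sum; eauto|].
eapply cle_trans; [apply sum_le_prod, iZ|apply ceq_le, hess, iZ].
Qed.
Lemma abs_prod Z A B : inf Z -> card_le A Z -> card_le B Z -> card_le (A * B) Z.
Proof.
intros iZ hA hB. eapply cle_trans; [apply cle_prod; eauto|apply ceq_le, hess, iZ].
Qed.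
Lemma inf_unit Z : inf Z -> card_le unit Z.
Proof. intros [e He]; exists (fun _ => e 0); intros [] []; auto. Qed.
Lemma abs_unit Z : inf Z -> card_eq (Z + unit) Z.
Proof.
intros iZ; apply SB; [apply abs_sum; auto using cle_refl, inf_unit|apply cle_inl].
Qed.
Lemma ceq_sum A A' B B' : card_eq A A' -> card_eq B B' -> card_eq (A + B) (A' + B').
Proof.
intros h1 h2; apply SB; apply cle_sum; auto using ceq_le, ceq_le'.
Qed.
Lemma clt_irrefl A : ~ card_lt A A.
Proof. intros [_ h]; apply h, cle_refl. Qed.
Lemma clt_le_trans A B C : card_lt A B -> card_le B C -> card_lt A C.
Proof.
intros [h1 h2] h3; split; [eapply cle_trans; eauto|intros h4; apply h2; eapply cle_trans; eauto].
Qed.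
Lemma cle_lt_trans A B C : card_le A B -> card_lt B C -> card_lt A C.
Proof.
intros h1 [h2 h3]; split; [eapply cle_trans; eauto|intros h4; apply h3; eapply cle_trans; eauto].
Qed.
Lemma not_clt A B : ~ card_lt A B -> card_le B A.
Proof.
intros h. destruct (cle_total B A) as [h'|h']; auto.
apply NNPP; intros h''; apply h; split; auto.
Qed.
Lemma clt_sum Z A B : card_lt A Z -> card_lt B Z -> (inf A \/ inf B) -> card_lt (A + B) Z.
Proof.
intros hA hB hi. destruct (cle_total A B) as [h|h].
- eapply cle_lt_trans; [|exact hB]. apply abs_sum; auto using cle_refl.
  destruct hi; auto. eapply inf_le; eauto.
- eapply cle_lt_trans; [|exact hA]. apply abs_sum; auto using cle_refl.
  destruct hi; auto. eapply inf_le; eauto.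
Qed.

Definition swo {Y : Type} (W : Y -> Y -> Prop) :=
  (forall y, ~ W y y) /\ (forall a b c, W a b -> W b c -> W a c) /\
  (forall a b, W a b \/ a = b \/ W b a) /\
  (forall Q : Y -> Prop, (exists y, Q y) -> exists z, Q z /\ forall y, Q y -> ~ W y z).

Lemma swo_exists Y : exists W : Y -> Y -> Prop, swo W.
Proof.
destruct (wo_prop Y) as [R [Rmin Ranti]].
assert (Rtot : forall a b, R a b \/ R b a).
{ intros a b. destruct (Rmin (fun x => x = a \/ x = b)) as [z [[->| ->] hz]]; eauto. }
exists (fun a b => R a b /\ a <> b). split; [|split; [|split]].
- intros y [_ h]; auto.
- intros a b c [h1 n1] [h2 n2]. split.
  + destruct (Rmin (fun x => x = a \/ x = b \/ x = c)) as [z [hz hmin]]; eauto.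
    destruct hz as [-> | [-> | ->]].
    * apply hmin; auto.
    * exfalso; apply n1, Ranti; auto.
    * exfalso; apply n2, Ranti; auto.
  + intros ->. apply n1, Ranti; auto.
- intros a b. destruct (classic (a = b)); auto.
  destruct (Rtot a b); [left|right; right]; split; auto.
- intros Q hQ. destruct (Rmin Q hQ) as [z [hz hmin]]. exists z; split; auto.
  intros y hy [h1 h2]. apply h2, Ranti; auto.
Qed.

Definition wseg {Y} (W : Y -> Y -> Prop) (z : Y) := {y | W y z}.

Lemma swo_initial Y : exists W : Y -> Y -> Prop, swo W /\ forall z, card_lt (wseg W z) Y.
Proof.
destruct (swo_exists Y) as [W0 [W1 [W2 [W3 W4]]]].
destruct (classic (exists z, ~ card_lt (wseg W0 z) Y)) as [hz|hz].
- destruct (W4 _ hz) as [y1 [h1 hmin]].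
  assert (E : card_eq Y (wseg W0 y1)).
  { apply SB; [apply not_clt; auto|apply cle_sub]. }
  destruct E as [phi [Hp1 Hp2]].
  exists (fun a b => W0 (proj1_sig (phi a)) (proj1_sig (phi b))). split; [split; [|split; [|split]]|].
  + intros y; apply W1.
  + intros a b c; apply W2.
  + intros a b. destruct (W3 (proj1_sig (phi a)) (proj1_sig (phi b))) as [h|[h|h]]; auto.
    right; left; apply Hp1, sig_eq, h.
  + intros Q [y hy].
    destruct (W4 (fun x => exists y, Q y /\ proj1_sig (phi y) = x)) as [x [[y0 [q0 e0]] hm]].
    { eauto. }
    exists y0; split; auto. intros y' q' w. apply (hm (proj1_sig (phi y'))); eauto. congruence.
  + intros z.
    assert (hz' : card_lt (wseg W0 (proj1_sig (phi z))) Y).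
    { apply NNPP; intros n. apply (hmin _ n). exact (proj2_sig (phi z)). }
    eapply cle_lt_trans; [|exact hz'].
    exists (fun y : wseg (fun a b => W0 (proj1_sig (phi a)) (proj1_sig (phi b))) z =>
      exist (fun x => W0 x (proj1_sig (phi z))) (proj1_sig (phi (proj1_sig y))) (proj2_sig y)).
    intros [a ha] [b hb] E. injection E as E. apply sig_eq; simpl. apply Hp1, sig_eq, E.
- exists W0; split; [split; auto|].
  intros z; apply NNPP; intros n; apply hz; eauto.
Qed.

Lemma succ_core Y T (W : Y -> Y -> Prop) (P : Y -> Prop) :
  swo W -> inf T -> card_lt T {y | P y} ->
  (forall y, P y -> card_le (wseg W y) T) -> is_succ_card T {y | P y}.
Proof.
intros [W1 [W2 [W3 W4]]] iT hlt hP. split; auto.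
intros C hC. apply NNPP; intros hn.
destruct (cle_total {y | P y} C) as [h|[j Hj]]; [contradiction|].
assert (iC : inf C) by (eapply inf_le; [exact iT|exact (proj1 hC)]).
destruct (classic (exists z, P z /\ forall c, W (proj1_sig (j c)) z)) as [[z [pz hb]]|nb].
- apply (proj2 hC). eapply cle_trans; [|apply (hP z pz)].
  exists (fun c => exist (fun y => W y z) (proj1_sig (j c)) (hb c)).
  intros c c' E; injection E as E; apply Hj, sig_eq, E.
- assert (hc : forall z : {y | P y}, exists c, ~ W (proj1_sig (j c)) (proj1_sig z)).
  { intros [z pz]. apply NNPP; intros n; apply nb. exists z; split; auto.
    intros c; apply NNPP; intros n'; apply n; eauto. }
  assert (Hg0 : forall c, card_le (wseg W (proj1_sig (j c))) T)
    by (intros c; apply hP, (proj2_sig (j c))).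
  set (g := fun c => proj1_sig (constructive_indefinite_description _ (Hg0 c))).
  assert (Hg : forall c a b, g c a = g c b -> a = b)
    by (intros c; exact (proj2_sig (constructive_indefinite_description _ (Hg0 c)))).
  set (cz := fun z => proj1_sig (constructive_indefinite_description _ (hc z))).
  assert (Hcz : forall z, ~ W (proj1_sig (j (cz z))) (proj1_sig z))
    by (intros z; exact (proj2_sig (constructive_indefinite_description _ (hc z)))).
  apply hn. eapply cle_trans with (B := (C * (T + unit))%type).
  + exists (fun z => (cz z,
       match excluded_middle_informative (W (proj1_sig z) (proj1_sig (j (cz z)))) with
       | left w => inl (g (cz z) (exist _ (proj1_sig z) w))
       | right _ => inr tt end)).
    intros z1 z2 E. injection E as E1 E2.
    destruct (excluded_middle_informative (W (proj1_sig z1) (proj1_sig (j (cz z1))))) as [w1|w1];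
    destruct (excluded_middle_informative (W (proj1_sig z2) (proj1_sig (j (cz z2))))) as [w2|w2];
    try discriminate.
    * injection E2 as E2. revert w2 E2. rewrite <- E1. intros w2 E2.
      apply Hg in E2. injection E2 as E2. apply sig_eq, E2.
    * assert (e1 : proj1_sig z1 = proj1_sig (j (cz z1))).
      { destruct (W3 (proj1_sig z1) (proj1_sig (j (cz z1)))) as [h|[h|h]]; auto.
        contradiction. exfalso; apply (Hcz z1); auto. }
      assert (e2 : proj1_sig z2 = proj1_sig (j (cz z2))).
      { destruct (W3 (proj1_sig z2) (proj1_sig (j (cz z2)))) as [h|[h|h]]; auto.
        contradiction. exfalso; apply (Hcz z2); auto. }
      apply sig_eq; rewrite e1, e2, E1; reflexivity.
  + apply abs_prod; auto using cle_refl.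
    apply abs_sum; auto using inf_unit. exact (proj1 hC).
Qed.

Lemma succ_exists Y T : inf T -> card_lt T Y -> exists P : Y -> Prop, is_succ_card T {y | P y}.
Proof.
intros iT hlt. destruct (swo_exists Y) as [W HW].
destruct (classic (exists z, card_lt T (wseg W z))) as [hz|hz].
- destruct (proj2 (proj2 (proj2 HW)) _ hz) as [z0 [h0 hmin]].
  exists (fun y => W y z0). apply succ_core with (W := W); auto.
  intros y hy. apply not_clt. intros h. apply (hmin y h hy).
- exists (fun _ => True). apply succ_core with (W := W); auto.
  + eapply clt_le_trans; [exact hlt|].
    exists (fun y => exist (fun _ => True) y I). intros a b E; injection E; auto.
  + intros y _. apply not_clt. intros h; apply hz; eauto.
Qed.


Section Basic.
Context {tau : vocab} {U : Type} (C : abstract_class tau U).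

Lemma le_dom M N : le C M N -> forall x, sdom M x -> sdom N x.
Proof. intros h; exact (proj1 (le_sub h)). Qed.

Lemma sub_card (M N : structure tau U) : (forall x, sdom M x -> sdom N x) -> card_le (dsort M) (dsort N).
Proof.
intros h. exists (fun x : dsort M => exist (sdom N) (proj1_sig x) (h _ (proj2_sig x))).
intros a b E; injection E; apply sig_eq.
Qed.

Lemma same_ceq (M N : structure tau U) : same_universe M N -> card_eq (dsort M) (dsort N).
Proof.
intros h; apply SB; apply sub_card; intros x; apply h.
Qed.

Lemma clt_not_same (M N : structure tau U) : card_lt (dsort M) (dsort N) -> ~ same_universe M N.
Proof.
intros [_ h] s. apply h, ceq_le, ceq_sym, same_ceq, s.
Qed.

Lemma not_same_elem (M N : structure tau U) : (forall x, sdom M x -> sdom N x) ->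
  ~ same_universe M N -> exists x, sdom N x /\ ~ sdom M x.
Proof.
intros h n. apply NNPP; intros n'; apply n; intros x; split; auto.
intros hx; apply NNPP; intros hx'; apply n'; eauto.
Qed.

Lemma ltK_trans a b c : lt_K C a b -> lt_K C b c -> lt_K C a c.
Proof.
intros [h1 n1] [h2 n2]; split; [eapply le_trans; eauto|].
intros s; apply n1; intros x; split; [apply le_dom; auto|].
intros hb; apply s, (le_dom _ _ h2 _ hb).
Qed.
Lemma ltK_le_trans a b c : lt_K C a b -> le C b c -> lt_K C a c.
Proof.
intros [h1 n1] h2; split; [eapply le_trans; eauto|].
intros s; apply n1; intros x; split; [apply le_dom; auto|].
intros hb; apply s, (le_dom _ _ h2 _ hb).
Qed.
Lemma le_ltK_trans a b c : le C a b -> lt_K C b c -> lt_K C a c.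
Proof.
intros h1 [h2 n2]; split; [eapply le_trans; eauto|].
intros s; apply n2; intros x; split; [apply le_dom; auto|].
intros hc; apply (le_dom _ _ h1), s, hc.
Qed.
Lemma ltK_irrefl a : ~ lt_K C a a.
Proof. intros [_ n]; apply n; intros x; tauto. Qed.
Lemma ltK_asym a b : lt_K C a b -> le C b a -> False.
Proof.
intros [h n] h'; apply n; exact (le_antisym h h').
Qed.

Lemma tail_le (LS : Type)
  (H1b : forall M, K C M -> ~ card_lt (dsort M) LS)
  (H2 : forall Mlam, K C Mlam ->
     forall (I : Type) (lt : I -> I -> Prop) (ch : I -> structure tau U),
       well_order lt -> limit_ord lt -> incr_chain C lt ch ->
       (forall i, card_le LS (dsort (ch i)) /\ card_lt (dsort (ch i)) (dsort Mlam)) ->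
       forall N, is_union (fun _ => True) ch N ->
         K C N /\ (forall i0, least lt i0 -> le C (ch i0) N))
  (I : Type) (lt : I -> I -> Prop) (ch : I -> structure tau U) (Mlam N : structure tau U) :
  well_order lt -> (forall j, exists k, lt j k) -> incr_chain C lt ch -> K C Mlam ->
  (forall j, card_lt (dsort (ch j)) (dsort Mlam)) -> is_union (fun _ => True) ch N ->
  forall i, K C N /\ le C (ch i) N.
Proof.
intros [w1 [w2 [w3 w4]]] nm [i1 i2] hK hs [u1 u2].
assert (gen : forall i, K C N /\ le C (ch i) N).
{ intros i.
  set (J := {j | i = j \/ lt i j}).
  set (ltJ := fun a b : J => lt (proj1_sig a) (proj1_sig b)).
  set (chJ := fun a : J => ch (proj1_sig a)).
  set (a0 := exist (fun j => i = j \/ lt i j) i (or_introl eq_refl)).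
  destruct (H2 Mlam hK J ltJ chJ) with (N := N) as [k1 k2].
  - split; [|split; [|split]].
    + intros a; apply w1.
    + intros a b c; apply w2.
    + intros a b. destruct (w3 (proj1_sig a) (proj1_sig b)) as [h|[h|h]]; auto.
      right; left; apply sig_eq, h.
    + apply (wf_inverse_image _ _ lt (fun a : J => proj1_sig a) w4).
  - split; [exact (inhabits a0)|].
    intros [j hj]. destruct (nm j) as [k hk].
    exists (exist _ k (or_intror (match hj with or_introl e => eq_ind_r (fun z => lt z k) hk e
                                   | or_intror h => w2 _ _ _ h hk end))). exact hk.
  - split; [intros a; apply i1|intros a b; apply i2].
  - intros a; split; [apply not_clt, H1b, i1|apply hs].
  - split.
    + intros x; rewrite u1; split.
      * intros [j [_ hj]].
        destruct (w3 i j) as [h|[h|h]].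
        -- exists (exist _ j (or_intror h)); split; auto.
        -- exists (exist _ j (or_introl h)); split; auto.
        -- exists a0; split; auto. exact (le_dom _ _ (i2 _ _ h) _ hj).
      * intros [a [_ ha]]; exists (proj1_sig a); auto.
    + intros a _; apply u2; auto.
  - split; auto. apply (k2 a0). intros [b hb] hl. unfold ltJ in hl; simpl in hl.
    destruct hb as [<-|hb]; [apply (w1 _ hl)|apply (w1 i), (w2 _ _ _ hb hl)]. }
exact gen.
Qed.
End Basic.


Set Bullet Behavior "Strict Subproofs".
Set Implicit Arguments. Unset Strict Implicit.
Section Main.
Variables (tau : vocab) (U : Type) (C : abstract_class tau U) (LS : Type).
Hypothesis H1a : is_LS C LS.
Hypothesis H1b : forall M, K C M -> ~ card_lt (dsort M) LS.
Hypothesis H2 : forall Mlam, K C Mlam ->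
     forall (I : Type) (lt : I -> I -> Prop) (ch : I -> structure tau U),
       well_order lt -> limit_ord lt -> incr_chain C lt ch ->
       (forall i, card_le LS (dsort (ch i)) /\ card_lt (dsort (ch i)) (dsort Mlam)) ->
       forall N, is_union (fun _ => True) ch N ->
         K C N /\ (forall i0, least lt i0 -> le C (ch i0) N).
Hypothesis H3 : forall M0 M1 M2, K C M0 -> K C M1 -> K C M2 ->
     le C M0 M2 -> le C M1 M2 -> (forall x, sdom M0 x -> sdom M1 x) ->
     card_lt (dsort M0) (dsort M1) -> card_lt (dsort M1) (dsort M2) ->
     le C M0 M1.
Hypothesis H4 : forall (I : Type) (lt : I -> I -> Prop) (ch : I -> structure tau U)
          (Mdelta N : structure tau U),
     well_order lt -> limit_ord lt -> incr_chain C lt ch -> continuous lt ch ->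
     is_union (fun _ => True) ch Mdelta -> K C Mdelta ->
     (forall i, le C (ch i) Mdelta) ->
     K C N -> (forall i, le C (ch i) N) ->
     card_lt (dsort Mdelta) (dsort N) -> le C Mdelta N.
Hypothesis H5 : forall M N, card_le LS (dsort M) -> le C M N ->
     is_succ_card (dsort M) (dsort N) ->
     exists (I : Type) (lt : I -> I -> Prop) (ch : I -> structure tau U),
       well_order lt /\
       card_eq I (dsort N) /\ (forall i, card_lt (seg lt i) I) /\
       incr_chain C lt ch /\ continuous lt ch /\
       (forall i, card_eq (dsort (ch i)) (dsort M)) /\
       (forall i0, least lt i0 -> ch i0 = M) /\
       is_union (fun _ => True) ch N.

Lemma LS_nat : card_le nat LS.
Proof. eapply cle_trans; [apply cle_inr|exact (proj1 H1a)]. Qed.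
Lemma K_LS N : K C N -> card_le LS (dsort N).
Proof. intros h; apply not_clt, H1b, h. Qed.
Lemma K_inf N : K C N -> inf (dsort N).
Proof. intros h; eapply cle_trans; [apply LS_nat|apply K_LS, h]. Qed.

Variables (M M0 : structure tau U).
Hypothesis hM : K C M.
Hypothesis hM0 : le C M0 M.
Hypothesis hlt : card_lt (dsort M0) (dsort M).
Variable W : dsort M -> dsort M -> Prop.
Hypothesis HW : swo W.
Hypothesis HWi : forall z, card_lt (wseg W z) (dsort M).

Definition wleast (P : structure tau U) (x : U) :=
  sdom M x /\ ~ sdom P x /\
  forall (y : dsort M) (hx : sdom M x), ~ sdom P (proj1_sig y) -> ~ W y (exist _ x hx).

Lemma wleast_ex P : (forall x, sdom P x -> sdom M x) -> ~ same_universe P M -> exists x, wleast P x.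
Proof.
intros hs n. destruct (not_same_elem _ _ hs n) as [x [h1 h2]].
destruct (proj2 (proj2 (proj2 HW)) (fun z : dsort M => ~ sdom P (proj1_sig z))) as [z [hz hmin]].
{ exists (exist _ x h1); auto. }
exists (proj1_sig z); split; [exact (proj2_sig z)|split; auto].
intros y hx hy; replace (exist (sdom M) (proj1_sig z) hx) with z by (apply sig_eq; reflexivity).
apply hmin; auto.
Qed.

Record Good (Ch : structure tau U -> Prop) : Prop := {
  g1 : Ch M0;
  g2 : forall N, Ch N -> le C M0 N /\ le C N M /\ card_lt (dsort N) (dsort M);
  g3 : forall N N', Ch N -> Ch N' -> le C N N' \/ le C N' N;
  g4 : forall N N', Ch N -> Ch N' -> same_universe N N' -> N = N';
  g5 : forall Q : structure tau U -> Prop, (exists N, Ch N /\ Q N) ->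
         exists N, Ch N /\ Q N /\ forall N', Ch N' -> Q N' -> ~ lt_K C N' N;
  g6 : forall N, Ch N -> (exists N', Ch N' /\ lt_K C N' N) ->
         (forall N', Ch N' -> lt_K C N' N -> exists N'', Ch N'' /\ lt_K C N' N'' /\ lt_K C N'' N) ->
         forall x, sdom N x -> exists N', Ch N' /\ lt_K C N' N /\ sdom N' x;
  g7 : forall N, Ch N -> card_eq (dsort N) (dsort M0 + {N' | Ch N' /\ lt_K C N' N});
  g8 : forall N P, Ch N -> Ch P -> lt_K C P N ->
         (forall N', Ch N' -> lt_K C P N' -> lt_K C N' N -> False) ->
         exists x, sdom N x /\ wleast P x }.

Definition Ext (Ch Ch' : structure tau U -> Prop) :=
  (forall N, Ch N -> Ch' N) /\ (forall N N', Ch N -> Ch' N' -> ~ Ch N' -> lt_K C N N').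

Lemma tri Ch : Good Ch -> forall N N', Ch N -> Ch N' -> lt_K C N N' \/ N = N' \/ lt_K C N' N.
Proof.
intros G N N' h h'. destruct (classic (same_universe N N')) as [s|s].
- right; left; apply (g4 G); auto.
- destruct (g3 G h h') as [l|l]; [left|right; right]; split; auto.
  intros s'; apply s; intros x; rewrite (s' x); tauto.
Qed.


Lemma ceq_sig_ext {X} (P Q : X -> Prop) : (forall x, P x <-> Q x) -> card_eq {x | P x} {x | Q x}.
Proof.
intros h. exists (fun a => exist Q (proj1_sig a) (proj1 (h _) (proj2_sig a))). split.
- intros a b E; injection E; apply sig_eq.
- intros [b hb]; exists (exist P b (proj2 (h _) hb)); apply sig_eq; reflexivity.
Qed.
Lemma ceq_sum_empty A B : (B -> False) -> card_eq A (A + B).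
Proof.
intros h. exists inl; split; [intros a b E; injection E; auto|].
intros [a|b]; [exists a; auto|destruct (h b)].
Qed.
Lemma ceq_sum_r A B B' : card_eq B B' -> card_eq (A + B) (A + B').
Proof. intros h; apply ceq_sum; auto using ceq_refl. Qed.

Lemma M0K : K C M0.
Proof. exact (proj1 (le_K hM0)). Qed.

Definition Ch0 (N : structure tau U) := N = M0.
Lemma Good0 : Good Ch0.
Proof.
unfold Ch0; split.
- reflexivity.
- intros N ->; split; [apply le_refl, M0K|split; auto].
- intros N N' -> ->; left; apply le_refl, M0K.
- intros N N' -> -> _; reflexivity.
- intros Q [N [-> q]]; exists M0; split; auto; split; auto.
  intros N' -> _; apply ltK_irrefl.
- intros N -> [N' [-> h]]; exfalso; apply (ltK_irrefl C _ h).
- intros N ->. apply ceq_sum_empty. intros [N' [-> h]]; apply (ltK_irrefl C _ h).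
- intros N P -> -> h; exfalso; apply (ltK_irrefl C _ h).
Qed.

Lemma Ext0 a : Good a -> Ext Ch0 a.
Proof.
intros G; split.
- intros N ->; apply (g1 G).
- intros N N' -> h n. split; [apply (g2 G h)|].
  intros s. apply n. apply (g4 G h (g1 G)). intros x; rewrite (s x); tauto.
Qed.

Lemma Ext_refl a : Ext a a.
Proof. split; auto. intros N N' _ h n; contradiction. Qed.
Lemma Ext_trans a b c : Ext a b -> Ext b c -> Ext a c.
Proof.
intros [s1 n1] [s2 n2]; split; auto.
intros N N' h h' n. destruct (classic (b N')) as [hb|hb]; eauto.
Qed.

Section Union.
Variable A : (structure tau U -> Prop) -> Prop.
Hypothesis HA : forall a, A a -> Good a.
Hypothesis HAc : forall a b, A a -> A b -> Ext a b \/ Ext b a.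
Hypothesis HAn : exists a, A a.
Definition Un (N : structure tau U) := exists a, A a /\ a N.

Lemma DC a N N' : A a -> a N -> Un N' -> le C N' N -> a N'.
Proof.
intros ha hN [b [hb hN']] l. destruct (classic (a N')) as [y|n]; auto.
destruct (HAc ha hb) as [[s e]|[s e]]; auto.
exfalso; apply (ltK_asym C _ _ (e _ _ hN hN' n) l).
Qed.

Lemma Un_common N N' : Un N -> Un N' -> exists a, A a /\ a N /\ a N'.
Proof.
intros [a [ha h]] [b [hb h']]. destruct (HAc ha hb) as [[s _]|[s _]].
- exists b; eauto.
- exists a; eauto.
Qed.

Lemma Un_good : Good Un.
Proof.
split.
- destruct HAn as [a ha]; exists a; split; auto; apply (g1 (HA ha)).
- intros N [a [ha h]]; apply (g2 (HA ha) h).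
- intros N N' h h'; destruct (Un_common h h') as [a [ha [k k']]]; apply (g3 (HA ha) k k').
- intros N N' h h'; destruct (Un_common h h') as [a [ha [k k']]]; apply (g4 (HA ha) k k').
- intros Q [N [[a [ha h]] q]].
  destruct (g5 (HA ha) (Q := Q)) as [N1 [h1 [q1 m1]]]; [eauto|].
  exists N1; split; [exists a; auto|split; auto].
  intros N' h' q' l. apply (m1 N'); auto. apply (DC ha h1 h'); apply l.
- intros N [a [ha h]] [N' [h' l']] hl x hx.
  destruct (g6 (HA ha) h) with (x := x) as [N2 [k2 [l2 x2]]]; auto.
  + exists N'; split; auto. apply (DC ha h h'); apply l'.
  + intros N1 k1 l1. destruct (hl N1) as [N3 [h3 [l3 l3']]]; [exists a; auto|auto|].
    exists N3; split; auto. apply (DC ha h h3); apply l3'.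
  + exists N2; split; [exists a; auto|auto].
- intros N [a [ha h]]. eapply ceq_trans; [apply (g7 (HA ha) h)|].
  apply ceq_sum_r, ceq_sig_ext. intros N'; split.
  + intros [k l]; split; auto; exists a; auto.
  + intros [k l]; split; auto. apply (DC ha h k); apply l.
- intros N P [a [ha h]] hP l hn.
  assert (aP : a P) by (apply (DC ha h hP); apply l).
  apply (g8 (HA ha) h aP l). intros N' k l1 l2; apply (hn N'); auto; exists a; auto.
Qed.

Lemma Un_ext a : A a -> Ext a Un.
Proof.
intros ha; split; [intros N h; exists a; auto|].
intros N N' h [b [hb h']] n. destruct (HAc ha hb) as [[s e]|[s e]]; auto.
exfalso; apply n, s, h'.
Qed.
End Union.


Lemma EXT Ch Z : Good Ch ->
  (forall N, Ch N -> lt_K C N Z) -> le C Z M -> card_lt (dsort Z) (dsort M) ->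
  ((forall N', Ch N' -> exists N'', Ch N'' /\ lt_K C N' N'') ->
      forall x, sdom Z x -> exists N', Ch N' /\ sdom N' x) ->
  card_eq (dsort Z) (dsort M0 + {N | Ch N}) ->
  (forall P, Ch P -> (forall N', Ch N' -> lt_K C P N' -> False) -> exists x, sdom Z x /\ wleast P x) ->
  Good (fun N => Ch N \/ N = Z) /\ Ext Ch (fun N => Ch N \/ N = Z).
Proof.
intros G z2 z3 z4 z6 z7 z8.
assert (nZ : forall N, Ch N -> lt_K C Z N -> False).
{ intros N h l. apply (ltK_asym C _ _ l), z2, h. }
assert (nCZ : ~ Ch Z) by (intros h; apply (ltK_irrefl C _ (z2 _ h))).
split; [split|].
- left; apply (g1 G).
- intros N [h| ->]; [apply (g2 G h)|].
  split; [apply (z2 _ (g1 G))|split; auto].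
- intros N N' [h| ->] [h'| ->].
  + apply (g3 G h h').
  + left; apply (z2 _ h).
  + right; apply (z2 _ h').
  + left; apply le_refl, (le_K z3).
- intros N N' [h| ->] [h'| ->] s.
  + apply (g4 G h h' s).
  + exfalso; apply (proj2 (z2 _ h) s).
  + exfalso; apply (proj2 (z2 _ h')). intros x; rewrite (s x); tauto.
  + reflexivity.
- intros Q hQ. destruct (classic (exists N, Ch N /\ Q N)) as [e|e].
  + destruct (g5 G e) as [N1 [h1 [q1 m1]]]. exists N1; split; [left; auto|split; auto].
    intros N' [h'| ->] q' l; [apply (m1 N' h' q' l)|apply (nZ _ h1 l)].
  + exists Z. destruct hQ as [N [[h| ->] q]]; [exfalso; apply e; eauto|].
    split; [right; auto|split; auto].
    intros N' [h'| ->] q' l; [apply e; eauto|apply (ltK_irrefl C _ l)].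
- intros N [h| ->] hp hb x hx.
  + destruct (g6 G h) with (x := x) as [N2 [k2 [l2 x2]]]; auto.
    * destruct hp as [N' [[h'| ->] l']]; [eauto|exfalso; apply (nZ _ h l')].
    * intros N1 k1 l1. destruct (hb N1) as [N3 [[h3| ->] [l3 l3']]]; [left; auto|auto| |].
      -- eauto.
      -- exfalso; apply (nZ _ h l3').
    * exists N2; split; [left; auto|auto].
  + destruct (z6) with (x := x) as [N2 [k2 x2]]; auto.
    * intros N' h'. destruct (hb N') as [N3 [[h3| ->] [l3 l3']]]; [left; auto|apply z2, h'| |].
      -- eauto.
      -- exfalso; apply (ltK_irrefl C _ l3').
    * exists N2; split; [left; auto|split; auto].
- intros N [h| ->].
  + eapply ceq_trans; [apply (g7 G h)|]. apply ceq_sum_r, ceq_sig_ext.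
    intros N'; split; [intros [k l]; split; auto|].
    intros [[k| ->] l]; [split; auto|exfalso; apply (nZ _ h l)].
  + eapply ceq_trans; [apply z7|]. apply ceq_sum_r, ceq_sig_ext.
    intros N'; split; [intros k; split; [left; auto|apply z2, k]|].
    intros [[k| ->] l]; [auto|exfalso; apply (ltK_irrefl C _ l)].
- intros N P [h| ->] [hP| ->] l hn.
  + apply (g8 G h hP l). intros N' k l1 l2; apply (hn N'); auto.
  + exfalso; apply (nZ _ h l).
  + apply z8; auto. intros N' k l1. apply (hn N'); auto.
  + exfalso; apply (ltK_irrefl C _ l).
- split; [intros N h; left; auto|].
  intros N N' h [h'| ->] n; [contradiction|apply z2, h].
Qed.

Lemma NEXT Ch N : Good Ch -> Ch N -> (exists N', Ch N' /\ lt_K C N N') ->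
  exists e, wleast N e /\ forall N'', Ch N'' -> lt_K C N N'' -> sdom N'' e.
Proof.
intros G h hx.
destruct (g5 G (Q := fun N' => lt_K C N N')) as [N1 [h1 [l1 m1]]].
{ destruct hx as [N' [h' l']]; eauto. }
destruct (g8 G h1 h l1) as [e [he we]].
{ intros N' k la lb. apply (m1 N' k la lb). }
exists e; split; auto.
intros N'' k l. destruct (tri G h1 k) as [l'|[<-|l']].
- apply (le_dom C _ _ (proj1 l')), he.
- exact he.
- exfalso; apply (m1 _ k l l').
Qed.

Definition ltS (Ch : structure tau U -> Prop) (a b : {N | Ch N}) := lt_K C (proj1_sig a) (proj1_sig b).

Lemma wo_sig Ch : Good Ch -> well_order (ltS (Ch := Ch)).
Proof.
intros G; split; [|split; [|split]].
- intros a; apply ltK_irrefl.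
- intros a b c; apply ltK_trans.
- intros [a ha] [b hb]; unfold ltS; simpl.
  destruct (tri G ha hb) as [l|[e|l]]; auto. right; left; apply sig_eq; auto.
- intros a. apply NNPP; intros na.
  destruct (g5 G (Q := fun N => exists p : Ch N, ~ Acc (ltS (Ch := Ch)) (exist _ N p)))
    as [N1 [h1 [[p1 q1] m1]]].
  { exists (proj1_sig a); split; [exact (proj2_sig a)|exists (proj2_sig a)]. destruct a; exact na. }
  apply q1. constructor. intros y ly. apply NNPP; intros ny.
  apply (m1 (proj1_sig y) (proj2_sig y)); [|exact ly].
  exists (proj2_sig y). destruct y; exact ny.
Qed.

Definition Ustar (Ch : structure tau U -> Prop) : structure tau U :=
  {| sdom := fun x => exists N, Ch N /\ sdom N x; sfun := sfun M; srel := srel M |}.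

Lemma Ustar_sub Ch N : Good Ch -> Ch N -> substructure N (Ustar Ch).
Proof.
intros G h. destruct (le_sub (proj1 (proj2 (g2 G h)))) as [s1 [s2 s3]].
split; [intros x hx; exists N; auto|split; auto].
Qed.

Lemma Ustar_union Ch : Good Ch -> is_union (fun _ => True) (fun a : {N | Ch N} => proj1_sig a) (Ustar Ch).
Proof.
intros G; split.
- intros x; simpl; split.
  + intros [N [h hx]]; exists (exist _ N h); auto.
  + intros [[N h] [_ hx]]; exists N; auto.
- intros [N h] _; apply Ustar_sub; auto.
Qed.

Lemma Ustar_M Ch : Good Ch -> forall x, sdom (Ustar Ch) x -> sdom M x.
Proof. intros G x [N [h hx]]. apply (le_dom C _ _ (proj1 (proj2 (g2 G h))) _ hx). Qed.

Lemma NEXT2 Ch : Good Ch -> (forall N, Ch N -> exists N', Ch N' /\ lt_K C N N') ->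
  forall n : {N | Ch N}, exists e, wleast (proj1_sig n) e /\ sdom (Ustar Ch) e /\
     forall N'', Ch N'' -> lt_K C (proj1_sig n) N'' -> sdom N'' e.
Proof.
intros G nm [N h]; simpl.
destruct (NEXT G h (nm N h)) as [e [w p]].
exists e; split; auto; split; auto.
destruct (nm N h) as [N' [h' l']]. exists N'; split; auto.
Qed.

Lemma NEXT_inj Ch : Good Ch -> forall N1 N2 e, Ch N1 -> Ch N2 ->
   wleast N1 e -> wleast N2 e ->
   (forall N'', Ch N'' -> lt_K C N1 N'' -> sdom N'' e) ->
   (forall N'', Ch N'' -> lt_K C N2 N'' -> sdom N'' e) -> N1 = N2.
Proof.
intros G N1 N2 e h1 h2 [_ [n1 _]] [_ [n2 _]] p1 p2.
destruct (tri G h1 h2) as [l|[E|l]]; auto.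
- exfalso; apply n2, p1; auto.
- exfalso; apply n1, p2; auto.
Qed.

Lemma US Ch : Good Ch -> (forall N, Ch N -> exists N', Ch N' /\ lt_K C N N') ->
  card_eq (dsort (Ustar Ch)) (dsort M0 + {N | Ch N}).
Proof.
intros G nm.
set (nu := (dsort M0 + {N | Ch N})%type).
assert (iM0 : inf (dsort M0)) by apply K_inf, M0K.
assert (inu : inf nu) by (eapply inf_le; [exact iM0|apply cle_inl]).
assert (iU : inf (dsort (Ustar Ch))).
{ eapply inf_le; [exact iM0|]. apply sub_card. intros x hx; exists M0; split; auto; apply (g1 G). }
apply SB.
- assert (s1 : forall N, Ch N -> card_le (dsort N) nu).
  { intros N h. eapply cle_trans; [apply ceq_le, (g7 G h)|].
    apply cle_sum; [apply cle_refl|].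
    exists (fun p : {N' | Ch N' /\ lt_K C N' N} => exist Ch (proj1_sig p) (proj1 (proj2_sig p))).
    intros a b E; injection E; apply sig_eq. }
  destruct iM0 as [e0 _].
  assert (hh : forall n : {N | Ch N}, exists hf : U -> nu,
            forall x y, sdom (proj1_sig n) x -> sdom (proj1_sig n) y -> hf x = hf y -> x = y).
  { intros [N h]; simpl. destruct (s1 N h) as [f hf].
    exists (fun x => match excluded_middle_informative (sdom N x) with
                     | left p => f (exist _ x p) | right _ => inl (e0 0) end).
    intros x y hx hy.
    destruct (excluded_middle_informative (sdom N x)) as [px|]; [|contradiction].
    destruct (excluded_middle_informative (sdom N y)) as [py|]; [|contradiction].
    intros E; apply hf in E; injection E; auto. }
  set (Hf := fun n => proj1_sig (constructive_indefinite_description _ (hh n))).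
  assert (HfP : forall n x y, sdom (proj1_sig n) x -> sdom (proj1_sig n) y -> Hf n x = Hf n y -> x = y)
    by (intros n; exact (proj2_sig (constructive_indefinite_description _ (hh n)))).
  assert (nx : forall x : dsort (Ustar Ch), exists n : {N | Ch N}, sdom (proj1_sig n) (proj1_sig x)).
  { intros [x [N [h hx]]]; exists (exist _ N h); auto. }
  set (Nx := fun x => proj1_sig (constructive_indefinite_description _ (nx x))).
  assert (NxP : forall x, sdom (proj1_sig (Nx x)) (proj1_sig x))
    by (intros x; exact (proj2_sig (constructive_indefinite_description _ (nx x)))).
  eapply cle_trans with (B := ({N | Ch N} * nu)%type).
  + exists (fun x => (Nx x, Hf (Nx x) (proj1_sig x))).
    intros x y E. injection E as E1 E2. rewrite <- E1 in E2.
    apply sig_eq, (HfP (Nx x)); auto. rewrite E1; auto.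
  + apply abs_prod; [exact inu|apply cle_inr|apply cle_refl].
- apply cle_trans with (B := (dsort (Ustar Ch) + dsort (Ustar Ch))%type);
    [|apply abs_sum; [exact iU|apply cle_refl|apply cle_refl]].
  apply cle_sum.
  + apply sub_card. intros x hx; exists M0; split; auto; apply (g1 G).
  + assert (h2 := NEXT2 G nm).
    exists (fun n => exist _ (proj1_sig (constructive_indefinite_description _ (h2 n)))
                   (proj1 (proj2 (proj2_sig (constructive_indefinite_description _ (h2 n)))))).
    intros n1 n2.
    destruct (constructive_indefinite_description _ (h2 n1)) as [e1 [w1 [u1 p1]]].
    destruct (constructive_indefinite_description _ (h2 n2)) as [e2 [w2 [u2 p2]]].
    simpl; intros E; injection E as E; subst e2. apply sig_eq.
    apply (NEXT_inj G (proj2_sig n1) (proj2_sig n2) w1 w2 p1 p2).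
Qed.

Definition pj1 {A B : Prop} (h : A /\ B) : A := match h with conj a _ => a end.

Lemma EX Ch : Good Ch -> (forall N, Ch N -> exists N', Ch N' /\ lt_K C N N') ->
  ~ same_universe (Ustar Ch) M -> card_lt (dsort (Ustar Ch)) (dsort M).
Proof.
intros G nm ns.
destruct (wleast_ex (Ustar_M G) ns) as [x [hx [nx _]]].
eapply cle_lt_trans; [apply ceq_le, US; auto|].
apply clt_sum; [exact hlt| |left; apply K_inf, M0K].
eapply cle_lt_trans; [|apply (HWi (exist _ x hx))].
assert (h2 := NEXT2 G nm).
destruct HW as [_ [_ [Wt _]]].
assert (hw : forall n, W (exist _ (proj1_sig (constructive_indefinite_description _ (h2 n)))
                 (pj1 (pj1 (proj2_sig (constructive_indefinite_description _ (h2 n)))))) (exist _ x hx)).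
{ intros n. destruct (constructive_indefinite_description _ (h2 n)) as [e [[he [ne we]] [ue pe]]]; simpl.
  destruct (Wt (exist _ e he) (exist _ x hx)) as [w|[E|w]].
  - exact w.
  - exfalso. apply (f_equal (@proj1_sig _ _)) in E. simpl in E. subst e. contradiction.
  - exfalso; apply (we (exist _ x hx) he); auto.
    intros hxn; apply nx; exists (proj1_sig n); split; [exact (proj2_sig n)|auto]. }
exists (fun n => exist (fun y => W y (exist _ x hx)) _ (hw n)).
intros n1 n2 E. apply (f_equal (fun z => proj1_sig (proj1_sig z))) in E. simpl in E.
pose proof (proj2_sig (constructive_indefinite_description _ (h2 n1))) as [w1 [u1 p1]].
pose proof (proj2_sig (constructive_indefinite_description _ (h2 n2))) as [w2 [u2 p2]].
simpl in w1, p1, w2, p2. rewrite <- E in w2, p2. apply sig_eq.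
apply (NEXT_inj G (proj2_sig n1) (proj2_sig n2) w1 w2 p1 p2).
Qed.

Lemma wf_min' {X} {R : X -> X -> Prop} {P : X -> Prop} : well_founded R -> (exists x, P x) ->
  exists m, P m /\ forall y, P y -> ~ R y m.
Proof.
intros wf [x px]. apply NNPP; intros n.
assert (forall y, Acc R y -> ~ P y).
{ intros y a. induction a as [y _ IH]. intros py. apply n. exists y; split; auto.
  intros z pz rz. apply (IH z rz pz). }
apply (H x (wf x) px).
Qed.

Lemma SUCC Ch T : Good Ch -> Ch T -> (forall N, Ch N -> le C N T) ->
  exists Z, Good (fun N => Ch N \/ N = Z) /\ Ext Ch (fun N => Ch N \/ N = Z) /\ ~ Ch Z.
Proof.
intros G hTc hmax.
destruct (g2 G hTc) as [leM0T [leTM ltTM]].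
assert (KT : K C T) by exact (proj1 (le_K leTM)).
assert (iT : inf (dsort T)) by (apply K_inf, KT).
assert (ns : ~ same_universe T M) by (apply clt_not_same, ltTM).
destruct (wleast_ex (le_dom C _ _ leTM) ns) as [x hxw].
assert (hxw' := hxw). destruct hxw' as [hxM [hxT _]].
destruct (succ_exists (dsort M) (dsort T) iT ltTM) as [P hP].
set (Pt := {y : dsort M | P y}).
set (A := fun y => (exists h : sdom M y, P (exist _ y h)) \/ sdom T y \/ y = x).
assert (hA : forall y, A y -> sdom M y).
{ intros y [[h _]|[h| ->]]; auto. apply (le_dom C _ _ leTM), h. }
destruct (proj1 (proj2 H1a) M hM A hA) as [M1 [lM1 [AM1 cM1]]].
assert (iP : inf Pt) by (eapply inf_le; [exact iT|exact (proj1 (proj1 hP))]).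
assert (c1 : card_le Pt (dsort M1)).
{ assert (hPin : forall d : dsort M, P d -> sdom M1 (proj1_sig d)).
  { intros [y h] p; apply AM1; left; exists h; exact p. }
  exists (fun z : Pt => exist _ (proj1_sig (proj1_sig z)) (hPin _ (proj2_sig z))).
  intros z z' E. injection E as E. apply sig_eq, sig_eq, E. }
assert (c2 : card_le (dsort M1) Pt).
{ eapply cle_trans; [exact cM1|].
  apply abs_sum; [exact iP| |eapply cle_trans; [apply K_LS, KT|exact (proj1 (proj1 hP))]].
  apply cle_trans with (B := ((Pt + dsort T) + unit)%type).
  - exists (fun z : {y | A y} =>
      match excluded_middle_informative (exists h : sdom M (proj1_sig z), P (exist _ (proj1_sig z) h)) with
      | left e => inl (inl (exist P (exist _ (proj1_sig z) (proj1_sig (constructive_indefinite_description _ e)))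
                                     (proj2_sig (constructive_indefinite_description _ e))))
      | right _ => match excluded_middle_informative (sdom T (proj1_sig z)) with
                   | left t => inl (inr (exist _ (proj1_sig z) t))
                   | right _ => inr tt end end).
    intros [y ay] [y' ay']; simpl.
    destruct (excluded_middle_informative (exists h : sdom M y, P (exist _ y h))) as [e|e];
    destruct (excluded_middle_informative (exists h : sdom M y', P (exist _ y' h))) as [e'|e'];
    try destruct (excluded_middle_informative (sdom T y)) as [t|t];
    try destruct (excluded_middle_informative (sdom T y')) as [t'|t'];
    intros E; try discriminate; apply sig_eq; simpl;
    apply (f_equal (fun q : (Pt + dsort T) + unit => match q with
       | inl (inl p) => Some (proj1_sig (proj1_sig p)) | inl (inr t) => Some (proj1_sig t)
       | inr _ => None end)) in E; simpl in E;
    first [injection E as E; exact E |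
      destruct ay as [ay|[ay|ay]]; [contradiction|contradiction|];
      destruct ay' as [ay'|[ay'|ay']]; [contradiction|contradiction|]; congruence].
  - apply abs_sum; [exact iP| |apply inf_unit, iP].
    apply abs_sum; [exact iP|apply cle_refl|exact (proj1 (proj1 hP))]. }
assert (succM1 : is_succ_card (dsort T) (dsort M1)).
{ destruct hP as [[hP1 hP2] hP3]. split; [split|].
  - eapply cle_trans; [exact hP1|exact c1].
  - intros h; apply hP2; eapply cle_trans; [exact c1|exact h].
  - intros Cc hc; eapply cle_trans; [exact c2|apply hP3, hc]. }
assert (KM1 : K C M1) by exact (proj1 (le_K lM1)).
assert (hB : exists B, K C B /\ le C T B /\ le C B M /\ is_succ_card (dsort T) (dsort B) /\ sdom B x).
{ destruct (classic (card_lt (dsort M1) (dsort M))) as [l|l].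
  - exists M1; split; auto; split; [|split; [exact lM1|split; [exact succM1|]]].
    + apply (H3 KT KM1 hM leTM lM1); [|exact (proj1 succM1)|exact l].
      intros y hy; apply AM1; right; left; exact hy.
    + apply AM1; right; right; reflexivity.
  - exists M; split; auto; split; [exact leTM|split; [apply le_refl, hM|split; [|exact hxM]]].
    assert (E : card_eq (dsort M1) (dsort M)).
    { apply SB; [apply sub_card, (le_dom C _ _ lM1)|apply not_clt, l]. }
    destruct succM1 as [[s1 s2] s3]. split; [split|].
    + eapply cle_trans; [exact s1|apply ceq_le, E].
    + intros h; apply s2; eapply cle_trans; [apply ceq_le, E|exact h].
    + intros Cc hc; eapply cle_trans; [apply ceq_le', E|apply s3, hc]. }
destruct hB as [B [KB [leTB [leBM [succB hxB]]]]].
destruct (H5 (K_LS KT) leTB succB) as [I' [lt' [ch' [wo [cI [segs [[ik il] [cont [csz [lst un]]]]]]]]]].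
destruct wo as [w1 [w2 [w3 w4]]].
destruct (proj1 (proj1 un x) hxB) as [i [_ hxi]].
set (Z := ch' i).
assert (nomax' : forall j, exists k, lt' j k).
{ intros j. apply NNPP; intros nk.
  apply (proj2 (proj1 succB)).
  eapply cle_trans; [|apply ceq_le, (csz j)].
  apply sub_card. intros y hy. destruct (proj1 (proj1 un y) hy) as [k [_ hk]].
  destruct (w3 j k) as [l|[<-|l]]; [exfalso; apply nk; eauto|exact hk|].
  apply (le_dom C _ _ (il _ _ l)), hk. }
assert (tl := tail_le C LS H1b H2 I' lt' ch' B B (conj w1 (conj w2 (conj w3 w4))) nomax' (conj ik il) KB
   (fun j => cle_lt_trans _ _ _ (ceq_le _ _ (csz j)) (proj1 succB)) un i).
destruct (wf_min' w4 (ex_intro (fun _ => True) i I)) as [i0 [_ hi0]].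
assert (li0 : least lt' i0) by (intros j l; apply (hi0 j I l)).
assert (leTZ : le C T Z).
{ rewrite <- (lst i0 li0). destruct (w3 i0 i) as [l|[<-|l]].
  - apply il, l.
  - apply le_refl, ik.
  - exfalso; apply (li0 i l). }
assert (z2 : forall N, Ch N -> lt_K C N Z).
{ intros N h. split; [apply (le_trans (hmax N h) leTZ)|].
  intros s. apply hxT. apply (le_dom C _ _ (hmax N h)). apply s, hxi. }
destruct (EXT (Z := Z) G z2) as [GG EE].
- apply (le_trans (proj2 tl) leBM).
- eapply cle_lt_trans; [apply ceq_le, (csz i)|exact ltTM].
- intros hn. destruct (hn T hTc) as [N'' [h'' l'']]. exfalso; apply (ltK_asym C _ _ l'' (hmax _ h'')).
- set (segT := {N' | Ch N' /\ lt_K C N' T}).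
  assert (iMs : inf (dsort M0 + segT)) by (eapply inf_le; [apply K_inf, M0K|apply cle_inl]).
  eapply ceq_trans; [apply (csz i)|]. eapply ceq_trans; [apply (g7 G hTc)|].
  apply ceq_sym. eapply ceq_trans with (B := (dsort M0 + (segT + unit))%type).
  + apply ceq_sum_r. apply SB.
    * exists (fun n : {N | Ch N} =>
        match excluded_middle_informative (proj1_sig n = T) with
        | left _ => inr tt
        | right ne => inl (exist (fun N' => Ch N' /\ lt_K C N' T) (proj1_sig n)
              (conj (proj2_sig n) (conj (hmax _ (proj2_sig n))
                 (fun s => ne (g4 G (proj2_sig n) hTc s))))) end).
      intros [n hn] [n' hn']; simpl.
      destruct (excluded_middle_informative (n = T)) as [e|e];
      destruct (excluded_middle_informative (n' = T)) as [e'|e']; intros E; try discriminate.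
      -- apply sig_eq; simpl; congruence.
      -- injection E as E. apply sig_eq; exact E.
    * exists (fun s : segT + unit => match s with
        | inl p => exist Ch (proj1_sig p) (proj1 (proj2_sig p))
        | inr _ => exist Ch T hTc end).
      intros [[p [hp lp]]|[]] [[p' [hp' lp']]|[]] E; apply (f_equal (@proj1_sig _ _)) in E; simpl in E.
      -- f_equal; apply sig_eq; exact E.
      -- subst; exfalso; apply (ltK_irrefl C _ lp).
      -- subst; exfalso; apply (ltK_irrefl C _ lp').
      -- reflexivity.
  + eapply ceq_trans; [apply SB; [apply cle_sum_assoc'|apply cle_sum_assoc]|].
    apply abs_unit, iMs.
- intros P0 hP0 nP0. assert (P0 = T).
  { apply (g4 G hP0 hTc). apply NNPP; intros ns'. apply (nP0 T hTc). split; auto. }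
  subst P0. exists x; split; auto.
- exists Z; split; auto; split; auto. intros hZ; apply (ltK_irrefl C _ (z2 Z hZ)).
Qed.

Lemma cont_sig Ch : Good Ch -> continuous (ltS (Ch := Ch)) (fun a => proj1_sig a).
Proof.
intros G [N h] [[[N1 h1] l1] hl]. unfold ltS in *; simpl in *. split.
- intros x; split.
  + intros hx. destruct (g6 G h) with (x := x) as [N2 [h2 [l2 x2]]]; auto.
    * exists N1; auto.
    * intros N' h' l'. destruct (hl (exist _ N' h') l') as [[N'' h''] [k1 k2]].
      exists N''; auto.
    * exists (exist _ N2 h2); auto.
  + intros [[N2 h2] [l2 x2]]. apply (le_dom C _ _ (proj1 l2)), x2.
- intros [N2 h2] l2. apply (le_sub (proj1 l2)).
Qed.

Lemma LIM Ch : Good Ch -> (forall N, Ch N -> exists N', Ch N' /\ lt_K C N N') ->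
  same_universe (Ustar Ch) M \/
  exists Z, Good (fun N => Ch N \/ N = Z) /\ Ext Ch (fun N => Ch N \/ N = Z) /\ ~ Ch Z.
Proof.
intros G nm.
assert (wo := wo_sig G).
assert (nmS : forall j : {N | Ch N}, exists k, ltS j k).
{ intros [N h]. destruct (nm N h) as [N' [h' l']]. exists (exist _ N' h'); auto. }
assert (incr : incr_chain C (ltS (Ch := Ch)) (fun a => proj1_sig a)).
{ split; [intros [N h]; exact (proj1 (le_K (proj1 (proj2 (g2 G h)))))|].
  intros i j l; apply (proj1 l). }
assert (tl := tail_le C LS H1b H2 {N | Ch N} (ltS (Ch := Ch)) (fun a => proj1_sig a) M (Ustar Ch)
   wo nmS incr hM (fun j => proj2 (proj2 (g2 G (proj2_sig j)))) (Ustar_union G)).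
destruct (classic (same_universe (Ustar Ch) M)) as [s|ns]; [left; exact s|right].
assert (ltUM := EX G nm ns).
assert (KU : K C (Ustar Ch)) by exact (proj1 (tl (exist _ M0 (g1 G)))).
assert (leUN : forall j : {N | Ch N}, le C (proj1_sig j) (Ustar Ch)) by (intros j; exact (proj2 (tl j))).
assert (limS : limit_ord (ltS (Ch := Ch))) by (split; [exact (inhabits (exist _ M0 (g1 G)))|exact nmS]).
assert (leUM := H4 wo limS incr (cont_sig G) (Ustar_union G) KU leUN hM
   (fun j => proj1 (proj2 (g2 G (proj2_sig j)))) ltUM).
destruct (EXT (Z := Ustar Ch) G) as [GG EE].
- intros N h. split; [exact (leUN (exist _ N h))|].
  intros s. destruct (nm N h) as [N' [h' l']].
  destruct (not_same_elem _ _ (le_dom C _ _ (proj1 l')) (proj2 l')) as [y [y1 y2]].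
  apply y2, s. exists N'; auto.
- exact leUM.
- exact ltUM.
- intros _ y [N [h hy]]; exists N; auto.
- apply US; auto.
- intros P hP hn. destruct (nm P hP) as [N' [h' l']]. exfalso; apply (hn N' h' l').
- exists (Ustar Ch); split; auto; split; auto.
  intros hU. destruct (nm _ hU) as [N' [h' l']].
  apply (ltK_asym C _ _ l'), leUN with (j := exist _ N' h').
Qed.

Theorem main_res : resolvable_over C M0 M.
Proof.
destruct (@zorn_prop {Ch | Good Ch} (fun a b => Ext (proj1_sig a) (proj1_sig b))) as [[Ch G] Hmax].
- intros a; apply Ext_refl.
- intros a b c; apply Ext_trans.
- intros [a ga] [b gb] [s1 _] [s2 _]; simpl in *.
  apply sig_eq; simpl. apply functional_extensionality; intros N.
  apply propositional_extensionality; split; auto.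
- intros A hA.
  set (A' := fun Ch => Ch = Ch0 \/ exists s, A s /\ proj1_sig s = Ch).
  assert (HA' : forall a, A' a -> Good a).
  { intros a [->|[s [_ <-]]]; [apply Good0|exact (proj2_sig s)]. }
  assert (HAc : forall a b, A' a -> A' b -> Ext a b \/ Ext b a).
  { intros a b [->|[s [hs <-]]] [->|[t [ht <-]]].
    - left; apply Ext_refl.
    - left; apply Ext0, (proj2_sig t).
    - right; apply Ext0, (proj2_sig s).
    - apply (hA s t hs ht). }
  assert (HAn : exists a, A' a) by (exists Ch0; left; reflexivity).
  exists (exist _ (Un A') (Un_good HA' HAc HAn)).
  intros s hs; simpl. apply (Un_ext HAc). right; exists s; auto.
- simpl in Hmax.
  assert (maxl : forall Z, Good (fun N => Ch N \/ N = Z) -> Ext Ch (fun N => Ch N \/ N = Z) -> Ch Z).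
  { intros Z GZ EZ. assert (E := Hmax (exist _ _ GZ) EZ).
    apply (f_equal (@proj1_sig _ _)) in E; simpl in E.
    rewrite <- E. right; reflexivity. }
  assert (nm : forall N, Ch N -> exists N', Ch N' /\ lt_K C N N').
  { intros N h. apply NNPP; intros n.
    destruct (SUCC G h) as [Z [GZ [EZ nZ]]].
    - intros N' h'. destruct (tri G h h') as [l|[<-|l]].
      + exfalso; apply n; eauto.
      + apply le_refl, (proj1 (le_K (proj1 (proj2 (g2 G h))))).
      + apply (proj1 l).
    - apply nZ, maxl; auto. }
  assert (same : same_universe (Ustar Ch) M).
  { destruct (LIM G nm) as [s|[Z [GZ [EZ nZ]]]]; auto. exfalso; apply nZ, maxl; auto. }
  split; [split; [exact hM0|apply clt_not_same, hlt]|].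
  exists {N | Ch N}, (ltS (Ch := Ch)). split; [apply wo_sig, G|split].
  { split; [exact (inhabits (exist _ M0 (g1 G)))|].
    intros [N h]. destruct (nm N h) as [N' [h' l']]. exists (exist _ N' h'); auto. }
  exists (fun a => proj1_sig a). split; [|split; [|split; [|split; [|split; [|split; [|split]]]]]].
  + intros [N h]; exact (proj1 (le_K (proj1 (proj2 (g2 G h))))).
  + intros i j l; exact l.
  + intros [N h]; simpl. split; [exact (proj1 (proj2 (g2 G h)))|apply clt_not_same, (g2 G h)].
  + apply cont_sig, G.
  + split.
    * intros x. rewrite <- (same x). destruct (Ustar_union G) as [u1 _]. apply u1.
    * intros [N h] _. apply (le_sub (proj1 (proj2 (g2 G h)))).
  + intros [N h] li. simpl.
    destruct (tri G (g1 G) h) as [l|[E|l]].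
    * exfalso; apply (li (exist _ M0 (g1 G)) l).
    * auto.
    * exfalso; apply (ltK_asym C _ _ l), (proj1 (g2 G h)).
  + intros [N h]; simpl. eapply ceq_trans; [apply (g7 G h)|]. apply ceq_sum_r. apply SB.
    * exists (fun p : {N' | Ch N' /\ lt_K C N' N} =>
         exist (fun j : {N | Ch N} => ltS j (exist _ N h)) (exist Ch (proj1_sig p) (proj1 (proj2_sig p)))
               (proj2 (proj2_sig p))).
      intros p p' E. apply (f_equal (fun z => proj1_sig (proj1_sig z))) in E. apply sig_eq, E.
    * exists (fun j : seg (ltS (Ch := Ch)) (exist _ N h) =>
         exist (fun N' => Ch N' /\ lt_K C N' N) (proj1_sig (proj1_sig j))
               (conj (proj2_sig (proj1_sig j)) (proj2_sig j))).
      intros j j' E. apply (f_equal (@proj1_sig _ _)) in E. simpl in E. apply sig_eq, sig_eq, E.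
  + eapply ceq_trans; [apply same_ceq; intros x; symmetry; apply same|]. apply US; auto.
Qed.
End Main.


Unset Implicit Arguments.
Set Strict Implicit.

Theorem lemma5p3 (tau : vocab) (U : Type) (C : abstract_class tau U) (LS : Type)
  (* (1) LS(K) = LS < infinity, no models of cardinality < LS(K) *)
  (H1a : is_LS C LS)
  (H1b : forall M, K C M -> ~ card_lt (dsort M) LS)
  (* (2) for every lambda = ||Mlam|| in dom(K), K is [LS(K), lambda)-continuous *)
  (H2 : forall Mlam, K C Mlam ->
     forall (I : Type) (lt : I -> I -> Prop) (ch : I -> structure tau U),
       well_order lt -> limit_ord lt -> incr_chain C lt ch ->
       (forall i, card_le LS (dsort (ch i)) /\ card_lt (dsort (ch i)) (dsort Mlam)) ->
       forall N, is_union (fun _ => True) ch N ->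
         K C N /\ (forall i0, least lt i0 -> le C (ch i0) N))
  (* (3) coherence for models of different sizes *)
  (H3 : forall M0 M1 M2, K C M0 -> K C M1 -> K C M2 ->
     le C M0 M2 -> le C M1 M2 -> (forall x, sdom M0 x -> sdom M1 x) ->
     card_lt (dsort M0) (dsort M1) -> card_lt (dsort M1) (dsort M2) ->
     le C M0 M1)
  (* (4) smoothness for big extensions *)
  (H4 : forall (I : Type) (lt : I -> I -> Prop) (ch : I -> structure tau U)
          (Mdelta N : structure tau U),
     well_order lt -> limit_ord lt -> incr_chain C lt ch -> continuous lt ch ->
     is_union (fun _ => True) ch Mdelta -> K C Mdelta ->
     (forall i, le C (ch i) Mdelta) ->
     K C N -> (forall i, le C (ch i) N) ->
     card_lt (dsort Mdelta) (dsort N) -> le C Mdelta N)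
  (* (5) resolvability for successors *)
  (H5 : forall M N, card_le LS (dsort M) -> le C M N ->
     is_succ_card (dsort M) (dsort N) ->
     exists (I : Type) (lt : I -> I -> Prop) (ch : I -> structure tau U),
       well_order lt /\
       (* (I,lt) is the ordinal lambda^+ *)
       card_eq I (dsort N) /\ (forall i, card_lt (seg lt i) I) /\
       incr_chain C lt ch /\ continuous lt ch /\
       (forall i, card_eq (dsort (ch i)) (dsort M)) /\
       (forall i0, least lt i0 -> ch i0 = M) /\
       is_union (fun _ => True) ch N) :
  resolvable_class C.
Proof.
intros M KM M0 le0 lt0.
destruct (swo_initial (dsort M)) as [W [HW HWi]].
exact (@main_res tau U C LS H1a H1b H2 H3 H4 H5 M M0 KM le0 lt0 W HW HWi).
Qed.
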